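(* Let $(S,M)$ be a surface with marked points and empty boundary and $T$ an ideal triangulation with property (T3). Then the adjacency quiver $Q$ of $T$ satisfies condition $(\star)$ if and only if $T$ has property (T3$\tfrac12$).
   Context: $(S,M)$: $S$ compact, connected, oriented surface without boundary, $M$ a finite non-empty set of punctures. Arcs incident to a puncture are counted with multiplicity (an arc with both ends at the puncture counted twice). Property (T3): at each puncture there are at least three arcs of $T$ incident to it. Property (T3$\tfrac12$): $T$ has (T3) and every arc of $T$ has an endpoint at which at least four arcs are incident. The adjacency quiver $Q$ has the arcs as vertices and an arrow $i\to j$ for each puncture $p$ and each occurrence of $j$ immediately following $i$ counterclockwise around $p$ (equivalently, for each corner at $p$ of a triangle with sides $i,j$). For such an arrow $\alpha$, $g(\alpha)$ is the arrow $j\to\ell$ where $\ell$ follows $j$ counterclockwise around $p$, and $f(\alpha)$ is the arrow $j\to k$ where $k$ is the third side of the triangle, at the other endpoint of $j$ in that triangle. $n_\alpha$ denotes the size of the $g$-orbit of $\alpha$, i.e. the least $r>0$ with $g^r(\alpha)=\alpha$. Condition $(\star)$: for every arrow $\alpha$, $n_\alpha\ge 4$ or $n_{f(\alpha)}\ge 4$. *)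

(* Defs.v *)
(* Combinatorial model of an ideal triangulation of a
   compact connected oriented surface without boundary, with punctures:
   a (triangular) combinatorial map on a finite set of darts (= arc ends).
   - sigma : successor of a dart counterclockwise around its puncture;
   - iota  : the other end of the same arc (fixed-point-free involution).
   Punctures = sigma-orbits, arcs = iota-orbits, triangles = orbits of
   iota \o sigma (all of size 3).  Corners of triangles = darts. *)
From mathcomp Require Import all_boot fingroup perm.

Set Implicit Arguments.
Unset Strict Implicit.
Unset Printing Implicit Defensive.

Section Triangulation.
Variables (D : finType) (sigma iota : {perm D}).

(* the face permutation: from the corner (d, sigma d) at one end of the
   arc of sigma d to the corner of the same triangle at its other end *)
Definition face_step (d : D) : D := iota (sigma d).

Definition is_ideal_triangulation : Prop :=
  [/\ 0 < #|D|,
      (forall d, iota (iota d) = d /\ iota d != d),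
      (forall d, fingraph.order face_step d = 3) &
      (forall d e, connect (fun x y => (y == sigma x) || (y == iota x)) d e)].

Definition arc_of (d : D) : {set D} := [set d; iota d].

(* number of arcs incident to the puncture at d, counted with multiplicity *)
Definition puncture_degree (d : D) : nat := fingraph.order sigma d.

Definition T3 : Prop := forall d, 3 <= puncture_degree d.

Definition T3half : Prop :=
  T3 /\ forall d, 4 <= puncture_degree d \/ 4 <= puncture_degree (iota d).

(* Adjacency quiver: vertices = arcs, arrows = corners = darts;
   the arrow d goes from arc_of d to arc_of (sigma d). *)
Definition quiver_source (alpha : D) : {set D} := arc_of alpha.
Definition quiver_target (alpha : D) : {set D} := arc_of (sigma alpha).

Definition quiver_g (alpha : D) : D := sigma alpha.
(* f(alpha): arrow j -> k at the other endpoint of j in the same triangle *)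
Definition quiver_f (alpha : D) : D := face_step alpha.

Definition n_arrow (alpha : D) : nat := fingraph.order quiver_g alpha.

Definition star_condition : Prop :=
  forall alpha, 4 <= n_arrow alpha \/ 4 <= n_arrow (quiver_f alpha).

End Triangulation.

(* Main.v *)
Require Import Defs.
From mathcomp Require Import all_boot fingroup perm.

Lemma order_sigma_step (D : finType) (s : {perm D}) (x : D) :
  fingraph.order s (s x) = fingraph.order s x.
Proof.
apply: fingraph.order_id_cycle.
apply/fingraph.injectivePcycle => a b _ _; exact: perm_inj.
Qed.

Theorem lemma2p5 (D : finType) (sigma iota : {perm D}) :
  is_ideal_triangulation sigma iota ->
  T3 sigma ->
  (star_condition sigma iota <-> T3half sigma iota).
Proof.
move=> _ HT3; split.
- move=> Hs; split => // d.
  have := Hs ((sigma^-1)%g d).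
  rewrite /n_arrow /quiver_f /face_step /quiver_g /puncture_degree.
  rewrite permKV -((@order_sigma_step D sigma ((sigma^-1)%g d))) permKV.
  by [].
- case=> _ H alpha.
  rewrite /n_arrow /quiver_f /face_step /quiver_g.
  have := H (sigma alpha).
  by rewrite /puncture_degree order_sigma_step.
Qed.
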